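(* Let $G=(V,E)$ be an undirected graph, $a,b\in[0,1]$, $\vec{x}\in\mathbb{R}^n$ non-negative with $\|\vec{x}\|_1=1$, and $(w_i)_{i\ge0}$ a non-negative weight sequence with $\sum_{i\ge0}w_i=1$ such that there exist a constant $L_0\ge1$ and a constant $\lambda<1$ with $w_i\lambda_{\max}^i\le\lambda^i$ for all $i\ge L_0$, where $\lambda_{\max}$ is the maximum singular value of $\mathbf{P}=\mathbf{D}^{-a}\mathbf{A}\mathbf{D}^{-b}$. Let $\delta\in(0,1)$, $\vec{\pi}=\sum_{i=0}^\infty w_i\mathbf{P}^i\vec{x}$ and, for an integer $L$, $\vec{\pi}_L=\sum_{i=0}^{L}w_i\mathbf{P}^i\vec{x}$. Then for $L=\max\{L_0,\lceil\log_\lambda((1-\lambda)\delta/19)\rceil\}=O(\log(1/\delta))$ we have $\left\|\sum_{i=L+1}^\infty w_i\mathbf{P}^i\vec{x}\right\|_2\le\delta/19$, and consequently: if $\hat{\vec{\pi}}\in\mathbb{R}^n$ satisfies $|\vec{\pi}_L(v)-\hat{\vec{\pi}}(v)|\le\frac{1}{20}\vec{\pi}_L(v)$ for every $v\in V$ with $\vec{\pi}_L(v)>\frac{18}{19}\delta$, then $|\vec{\pi}(v)-\hat{\vec{\pi}}(v)|\le\frac{1}{10}\vec{\pi}(v)$ for every $v\in V$ with $\vec{\pi}(v)\ge\delta$.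
   Context: $G=(V,E)$ has $n$ nodes; $\mathbf{A}$ is its adjacency matrix and $\mathbf{D}$ the diagonal degree matrix with $\mathbf{D}(i,i)=\sum_j\mathbf{A}(i,j)$. *)

(* Defs.v *)
From HB Require Import structures.
From mathcomp Require Import all_boot all_order all_algebra.
From mathcomp Require Import all_classical all_reals all_analysis.
Set Implicit Arguments. Unset Strict Implicit. Unset Printing Implicit Defensive.
Import Order.TTheory GRing.Theory Num.Theory.
Import numFieldNormedType.Exports.
Local Open Scope classical_set_scope.
Local Open Scope ring_scope.

Section Defs.
Variable R : realType.

Definition adjmx (n : nat) (e : rel 'I_n) : 'M[R]_n :=
  \matrix_(i, j) (e i j)%:R.

Definition degree (n : nat) (A : 'M[R]_n) (i : 'I_n) : R := \sum_j A i j.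

Definition degpow (n : nat) (A : 'M[R]_n) (s : R) : 'M[R]_n :=
  diag_mx (\row_i (degree A i `^ s)).

Definition transmx (n : nat) (A : 'M[R]_n) (a b : R) : 'M[R]_n :=
  degpow A (- a) *m A *m degpow A (- b).

Definition max_singular_value (n : nat) (M : 'M[R]_n) (s : R) : Prop :=
  0 <= s /\ eigenvalue (M^T *m M) (s ^+ 2) /\
  (forall c, eigenvalue (M^T *m M) c -> c <= s ^+ 2).

Definition series_from (m : nat) (u : nat -> R) : R :=
  lim ((fun N => \sum_(m <= i < N) u i) @ \oo).

Definition term (n : nat) (w : nat -> R) (P : 'M[R]_n) (x : 'cV[R]_n)
  (v : 'I_n) (i : nat) : R := w i * (P ^+ i *m x) v 0.

Definition ppr (n : nat) w P x (v : 'I_n) : R := series_from 0 (term w P x v).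

Definition ppr_trunc (n : nat) w P x (L : nat) (v : 'I_n) : R :=
  \sum_(0 <= i < L.+1) term w P x v i.

Definition ppr_tail (n : nat) w P x (L : nat) (v : 'I_n) : R :=
  series_from L.+1 (term w P x v).

Definition norm2 (n : nat) (f : 'I_n -> R) : R := Num.sqrt (\sum_v f v ^+ 2).

Definition logb (b y : R) : R := ln y / ln b.

Definition choose_L (L0 : nat) (lam delta : R) : nat :=
  maxn L0 `|Num.ceil (logb lam ((1 - lam) * delta / 19))|%N.

End Defs.

(* Main.v *)
Require Import Defs.
From HB Require Import structures.
From mathcomp Require Import all_boot all_order all_algebra.
From mathcomp Require Import all_classical all_reals all_analysis.
From mathcomp Require Import ring lra.
Import Order.TTheory GRing.Theory Num.Theory.
Import numFieldNormedType.Exports.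
Local Open Scope classical_set_scope.
Local Open Scope ring_scope.

Section Aux.
Set Implicit Arguments. Unset Strict Implicit. Unset Printing Implicit Defensive.
Variable R : realType.

Lemma quad_disc (a b c : R) : 0 <= c ->
  (forall t, 0 <= a + 2 * t * b + t ^+ 2 * c) -> b ^+ 2 <= a * c.
Proof.
move=> c0 H.
have a0 : 0 <= a by have := H 0; rewrite mulr0 mul0r expr0n mul0r !addr0.
have [cgt0|] := ltrP 0 c.
  have := H (- b / c).
  have -> : a + 2 * (- b / c) * b + (- b / c) ^+ 2 * c = a - b ^+ 2 / c.
    by field; rewrite gt_eqF.
  by rewrite subr_ge0 ler_pdivrMr.
move=> cle0; have c00 : c = 0 by apply/eqP; rewrite eq_le cle0 c0.
rewrite c00 mulr0.
have [->|bn0] := eqVneq b 0; first by rewrite expr0n.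
have := H (- (a + 1) / (2 * b)).
have -> : a + 2 * (- (a + 1) / (2 * b)) * b + (- (a + 1) / (2 * b)) ^+ 2 * c = -1.
  by rewrite c00 mulr0 addr0; field; rewrite bn0.
by move=> h; have : (0:R) < 1 by []; lra.
Qed.


Definition sqn (n : nat) (f : 'I_n -> R) : R := \sum_v f v ^+ 2.
Definition nrm (n : nat) (f : 'I_n -> R) : R := Num.sqrt (sqn f).

Lemma sqn_ge0 n (f : 'I_n -> R) : 0 <= sqn f.
Proof. by apply: sumr_ge0 => v _; apply: sqr_ge0. Qed.

Lemma CS n (f g : 'I_n -> R) : (\sum_v f v * g v) ^+ 2 <= sqn f * sqn g.
Proof.
apply: quad_disc; first exact: sqn_ge0.
move=> t.
have -> : sqn f + 2 * t * (\sum_v f v * g v) + t ^+ 2 * sqn g =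
  \sum_v (f v + t * g v) ^+ 2.
  rewrite /sqn mulr_sumr mulr_sumr -!big_split /=.
  by apply: eq_bigr => v _; ring.
by apply: sumr_ge0 => v _; apply: sqr_ge0.
Qed.

Lemma nrm_ge0 n (f : 'I_n -> R) : 0 <= nrm f.
Proof. exact: sqrtr_ge0. Qed.

Lemma sqn_nrm n (f : 'I_n -> R) : sqn f = nrm f ^+ 2.
Proof. by rewrite /nrm sqr_sqrtr // sqn_ge0. Qed.

Lemma minkowski n (f g : 'I_n -> R) :
  nrm (fun v => f v + g v) <= nrm f + nrm g.
Proof.
rewrite -(ler_pXn2r (_ : (0 < 2)%N)) ?nnegrE ?addr_ge0 ?nrm_ge0 //.
rewrite -sqn_nrm.
have -> : sqn (fun v => f v + g v) = sqn f + 2 * (\sum_v f v * g v) + sqn g.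
  rewrite /sqn mulr_sumr -!big_split /=.
  by apply: eq_bigr => v _; ring.
have h : \sum_v f v * g v <= nrm f * nrm g.
  have := CS f g; rewrite !sqn_nrm -exprMn => h.
  apply: le_trans (ler_norm _) _.
  by rewrite -(ler_pXn2r (_ : (0 < 2)%N)) ?nnegrE ?normr_ge0 ?mulr_ge0 ?nrm_ge0 // real_normK ?num_real.
rewrite !sqn_nrm.
have := nrm_ge0 f; have := nrm_ge0 g. nra.
Qed.

Lemma nrm_scale n c (f : 'I_n -> R) : nrm (fun v => c * f v) = `|c| * nrm f.
Proof.
rewrite /nrm /sqn.
have -> : \sum_v (c * f v) ^+ 2 = c ^+ 2 * \sum_v f v ^+ 2.
  by rewrite mulr_sumr; apply: eq_bigr => v _; rewrite exprMn.
by rewrite sqrtrM ?sqr_ge0 // sqrtr_sqr.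
Qed.

Lemma nrm_sum n (I : Type) (r : seq I) (F : I -> 'I_n -> R) :
  nrm (fun v => \sum_(i <- r) F i v) <= \sum_(i <- r) nrm (F i).
Proof.
elim: r => [|i r IH].
  rewrite big_nil /nrm /sqn.
  under eq_bigr do rewrite big_nil expr0n /=.
  by rewrite big1 // sqrtr0.
rewrite big_cons.
under [X in nrm X]funext do rewrite big_cons.
apply: le_trans (minkowski _ _) _.
by rewrite lerD2l.
Qed.

Lemma coord_le_nrm n (f : 'I_n -> R) v : `|f v| <= nrm f.
Proof.
rewrite -(ler_pXn2r (_ : (0 < 2)%N)) ?nnegrE ?normr_ge0 ?nrm_ge0 //.
rewrite -sqn_nrm real_normK ?num_real // /sqn (bigD1 v) //= lerDl.
by apply: sumr_ge0 => i _; apply: sqr_ge0.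
Qed.


Lemma cont_sum (T : topologicalType) (I : Type) (r : seq I) (F : I -> T -> R) :
  (forall i, continuous (F i)) -> continuous (fun x => \sum_(i <- r) F i x).
Proof.
move=> Fc; elim: r => [|i r IH].
  under [X in continuous X]funext do rewrite big_nil.
  exact: cst_continuous.
under [X in continuous X]funext do rewrite big_cons.
move=> x; exact: (continuousD (Fc i x) (IH x)).
Qed.

Definition qf n (N : 'M[R]_n) (u v : 'rV[R]_n) : R := (u *m N *m v^T) ord0 ord0.

Lemma qf_sym n (N : 'M[R]_n) u v : N^T = N -> qf N u v = qf N v u.
Proof.
move=> NT; rewrite /qf -[in LHS](trmxK (u *m N *m v^T)) mxE.
by rewrite !trmx_mul trmxK NT mulmxA.
Qed.

Lemma m11E (A B C D : 'M[R]_1) t :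
  (A + t *: B + t *: C + t ^+ 2 *: D) ord0 ord0 =
  A ord0 ord0 + t * B ord0 ord0 + t * C ord0 ord0 + t ^+ 2 * D ord0 ord0.
Proof. by rewrite !mxE. Qed.

Lemma m11B (A B : 'M[R]_1) : (A - B) ord0 ord0 = A ord0 ord0 - B ord0 ord0.
Proof. by rewrite !mxE. Qed.

Lemma m11Z (A : 'M[R]_1) t : (t *: A) ord0 ord0 = t * A ord0 ord0.
Proof. by rewrite !mxE. Qed.

Lemma qf_expand n (N : 'M[R]_n) c z t : N^T = N ->
  qf N (c + t *: z) (c + t *: z) = qf N c c + 2 * t * qf N c z + t ^+ 2 * qf N z z.
Proof.
move=> NT; rewrite /qf.
have -> : (c + t *: z) *m N *m (c + t *: z)^T =
  c *m N *m c^T + t *: (c *m N *m z^T) + t *: (z *m N *m c^T) + t ^+ 2 *: (z *m N *m z^T).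
  rewrite linearD /= linearZ /= !mulmxDl !mulmxDr -!scalemxAl -!scalemxAr scalerA -expr2.
  by rewrite !addrA; congr (_ + _); rewrite -!addrA; congr (_ + _); rewrite addrC.
rewrite m11E -/(qf N z c) (qf_sym z c NT) /qf; ring.
Qed.

Lemma qf_id n (u : 'rV[R]_n) : qf 1%:M u u = sqn (fun i => u ord0 i).
Proof.
rewrite /qf mulmx1 mxE /sqn; apply: eq_bigr => i _; rewrite mxE expr2 //.
Qed.

Lemma spectral_bound n (M : 'M[R]_n) (K : R) : M^T = M ->
  (forall mu, eigenvalue M mu -> mu <= K) ->
  forall u : 'rV[R]_n, qf M u u <= K * qf 1%:M u u.
Proof.
move=> MT Kub.
case: n M MT Kub => [|n] M MT Kub u.
  by rewrite /qf !mxE !big_ord0 mulr0.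
pose q := fun u : 'rV[R]_n.+1 => qf 1%:M u u.
pose f := fun u : 'rV[R]_n.+1 => qf M u u.
have q0 : forall u, q u = 0 -> u = 0.
  move=> v; rewrite /q qf_id /sqn => h; apply/rowP => i; rewrite mxE.
  apply/eqP; rewrite -sqrf_eq0; apply/eqP.
  by apply: (psumr_eq0P _ h) => // j _; apply: sqr_ge0.
have fcont : continuous f.
  have -> : f = fun u => \sum_j (\sum_i u ord0 i * M i j) * u ord0 j.
    apply/funext => v; rewrite /f /qf mxE; apply: eq_bigr => j _.
    by rewrite !mxE.
  apply: cont_sum => j; move=> v.
  apply: (@continuousM _ _ (fun u : 'rV[R]_n.+1 => \sum_i u ord0 i * M i j) (fun u => u ord0 j)); last exact: coord_continuous.
  apply: cont_sum => i w.
  apply: (@continuousM _ _ (fun u : 'rV[R]_n.+1 => u ord0 i) (fun u => M i j)); first exact: coord_continuous.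
  exact: cst_continuous.
have qcont : continuous q.
  have -> : q = fun u => \sum_i u ord0 i * u ord0 i.
    by apply/funext => v; rewrite /q qf_id /sqn; apply: eq_bigr => i _; rewrite expr2.
  apply: cont_sum => i v.
  apply: (@continuousM _ _ (fun u : 'rV[R]_n.+1 => u ord0 i) (fun u => u ord0 i)); exact: coord_continuous.
pose S := [set u : 'rV[R]_n.+1 | q u = 1].
have Scl : closed S.
  have -> : S = q @^-1` [set 1] by [].
  apply: preimage_closed; first by move=> v _; exact: qcont.
  apply: accessible_closed_set1; apply: hausdorff_accessible; exact: norm_hausdorff.
have Scomp : compact S.
  apply: (subclosed_compact Scl (@rV_compact _ _ (fun=> `[(-1 : R), 1]%classic) (fun=> @segment_compact _ _ _))).
  move=> v Sv i /=; rewrite in_itv /= -ler_norml.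
  have := coord_le_nrm (fun i => v ord0 i) i; rewrite /nrm -qf_id.
  by rewrite (Sv : qf 1%:M v v = 1) sqrtr1.
have S0 : S !=set0.
  exists (delta_mx ord0 ord0); rewrite /S /= /q qf_id /sqn (bigD1 ord0) //= !mxE eqxx /=.
  rewrite big1 ?addr0 ?expr1n // => i /negPf ne; by rewrite mxE ne mulr0n expr0n.
have [c Sc cmax] := EVT_max_rV S0 Scomp (continuous_subspaceT fcont).
move: Sc; rewrite inE => Sc.
pose mu := f c.
have bound : forall u, f u <= mu * q u.
  move=> v; have [qv0|qvn0] := eqVneq (q v) 0.
    by rewrite qv0 (q0 _ qv0) /f /qf mul0mx mul0mx mxE mulr0.
  have qpos : 0 < q v by rewrite lt0r qvn0 /q qf_id sqn_ge0.
  pose k := (Num.sqrt (q v))^-1.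
  have k2 : k ^+ 2 = (q v)^-1 by rewrite /k exprVn sqr_sqrtr // ltW.
  have hq : forall N (w : 'rV[R]_n.+1), qf N (k *: w) (k *: w) = k ^+ 2 * qf N w w.
    move=> N w; rewrite /qf linearZ /= -scalemxAl -scalemxAr -scalemxAl scalerA mxE -expr2 //.
  have Skv : S (k *: v) by rewrite /S /= /q hq k2 mulVf.
  have := cmax (k *: v); rewrite inE => /(_ Skv); rewrite /f hq k2 -/(f v) -/mu.
  by rewrite ler_pdivrMl // mulrC.
have eigc : c *m M = mu *: c.
  pose N := mu%:M - M.
  have NT : N^T = N by rewrite /N linearD /= linearN /= tr_scalar_mx MT.
  have gN : forall u, qf N u u = mu * q u - f u.
    move=> v; rewrite /qf /N mulmxBr mulmxBl m11B /f /q /qf; congr (_ - _).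
    by rewrite mul_mx_scalar -scalemxAl m11Z mulmx1.
  have gc : qf N c c = 0 by rewrite gN Sc mulr1 subrr.
  have Bz : forall z, qf N c z = 0.
    move=> z; apply/eqP; rewrite -sqrf_eq0 eq_le sqr_ge0 andbT.
    have := @quad_disc 0 (qf N c z) (qf N z z).
    rewrite mul0r; apply; first by rewrite gN; change (0 <= mu * q z - f z); rewrite subr_ge0 bound.
    move=> t; have := qf_expand c z t NT; rewrite gc add0r => E.
    rewrite -E gN.
    by change (0 <= mu * q (c + t *: z) - f (c + t *: z)); rewrite subr_ge0 bound.
  apply/eqP; rewrite -subr_eq0 -mul_mx_scalar -mulmxBr -[_ - _]opprB mulmxN oppr_eq0 -/N.
  apply/eqP/rowP => j; rewrite [RHS]mxE.
  have := Bz (delta_mx ord0 j); rewrite /qf mxE => <-.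
  rewrite (bigD1 j) //= !mxE !eqxx /= mulr1 [X in _ = _ + X]big1 ?addr0 // => i /negPf ne.
  by rewrite !mxE ne /= mulr0n mulr0.
have eig : eigenvalue M mu.
  apply/eigenvalueP; exists c => //; apply/eqP => c0.
  have q00 : q 0 = 0 by rewrite /q qf_id /sqn big1 // => i _; rewrite mxE expr0n.
  by move: Sc; rewrite c0 /S /= q00 => /eqP; rewrite eq_sym oner_eq0.
apply: le_trans (bound u) _; rewrite ler_wpM2r ?Kub //.
by rewrite /q qf_id sqn_ge0.
Qed.


Lemma cvg_sumseq (I : Type) (r : seq I) (f : I -> nat -> R) (l : I -> R) :
  (forall i, f i n @[n --> \oo] --> l i) ->
  (\sum_(i <- r) f i n) @[n --> \oo] --> \sum_(i <- r) l i.
Proof.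
move=> fl; elim: r => [|i r IH].
  rewrite big_nil; under eq_fun do rewrite big_nil; exact: cvg_cst.
rewrite big_cons; under eq_fun do rewrite big_cons.
exact: (cvgD (fl i) IH).
Qed.

Lemma P_bound n (P : 'M[R]_n) s : max_singular_value P s ->
  forall y : 'cV[R]_n, nrm (fun v => (P *m y) v ord0) <= s * nrm (fun v => y v ord0).
Proof.
move=> [s0 [_ eigub]] y.
have MT : (P^T *m P)^T = P^T *m P by rewrite trmx_mul trmxK.
have := spectral_bound MT eigub (y^T).
have e1 : qf (P^T *m P) y^T y^T = sqn (fun v => (P *m y) v ord0).
  have -> : qf (P^T *m P) y^T y^T = ((P *m y)^T *m (P *m y)) ord0 ord0.
    by rewrite /qf trmxK trmx_mul !mulmxA.
  by rewrite mxE /sqn; apply: eq_bigr => i _; rewrite mxE expr2.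
have e2 : qf 1%:M y^T y^T = sqn (fun v => y v ord0).
  by rewrite qf_id /sqn; apply: eq_bigr => i _; rewrite mxE.
rewrite e1 e2 => h.
rewrite /nrm -(@ger0_norm _ s) // -sqrtr_sqr -sqrtrM ?sqr_ge0 //.
by rewrite ler_sqrt // mulr_ge0 ?sqr_ge0 ?sqn_ge0.
Qed.

Lemma Ppow_bound n (P : 'M[R]_n) s : max_singular_value P s ->
  forall (y : 'cV[R]_n) i, nrm (fun v => (P ^+ i *m y) v ord0) <= s ^+ i * nrm (fun v => y v ord0).
Proof.
move=> hs y; elim=> [|i IH].
  by rewrite expr0 mul1mx mul1r.
have s0 : 0 <= s by case: hs.
rewrite exprS -mulmxA; apply: le_trans (P_bound hs _) _.
by rewrite exprS -mulrA ler_wpM2l.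
Qed.

Lemma psum_mono (u : nat -> R) m : (forall i, 0 <= u i) ->
  {homo (fun N => \sum_(m <= i < N) u i) : N N' / (N <= N')%N >-> N <= N'}.
Proof.
move=> u0 N N' /subnKC <-; elim: (N' - N)%N => [|k IH]; first by rewrite addn0.
apply: le_trans IH _; rewrite addnS.
have [h|h] := leqP m (N + k); first by rewrite big_nat_recr //= lerDl u0.
by rewrite !big_geq // ltnW.
Qed.

Lemma geom_sum (lam : R) m N : (m <= N)%N ->
  (\sum_(m <= i < N) lam ^+ i) * (1 - lam) = lam ^+ m - lam ^+ N.
Proof.
move=> /subnKC <-; elim: (N - m)%N => [|k IH]; first by rewrite addn0 big_geq // mul0r subrr.
rewrite addnS big_nat_recr /=; last by rewrite leq_addr.
rewrite mulrDl IH exprS; ring.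
Qed.

Lemma mx_ge0_mul m n p (A : 'M[R]_(m, n)) (B : 'M[R]_(n, p)) : (forall i j, 0 <= A i j) -> (forall i j, 0 <= B i j) ->
  forall i j, 0 <= (A *m B) i j.
Proof. by move=> hA hB i j; rewrite mxE sumr_ge0 // => k _; rewrite mulr_ge0. Qed.

End Aux.
Unset Implicit Arguments.
Set Strict Implicit.

Lemma Lpow_bound (R : realType) (L0 : nat) (lam delta : R) :
  0 < lam < 1 -> 0 < delta < 1 ->
  lam ^+ (choose_L L0 lam delta) <= (1 - lam) * delta / 19.
Proof.
move=> /andP[lam0 lam1] /andP[d0 d1].
set L := choose_L L0 lam delta.
set y := (1 - lam) * delta / 19.
have y0 : 0 < y by rewrite /y !mulr_gt0 // ?subr_gt0 // invr_gt0.
have y1 : y < 1.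
  have h : (1 - lam) * delta < 1 by nra.
  rewrite /y ltr_pdivrMr //; lra.
have lnl : ln lam < 0 by rewrite ln_lt0 // lam0 lam1.
have lny : ln y < 0 by rewrite ln_lt0 // y0 y1.
have Lge : logb lam y <= L%:R.
  apply: le_trans (ceil_ge _) _.
  apply: le_trans (_ : (`|Num.ceil (logb lam y)|%N)%:R <= _); last first.
    by rewrite ler_nat /L /choose_L leq_maxr.
  by rewrite natr_absz ler_int ler_norm.
rewrite -ler_ln ?posrE ?exprn_gt0 // lnXn // -mulr_natr.
by move: Lge; rewrite /logb ler_ndivrMr // mulrC.
Qed.

Lemma P_ge0 (R : realType) (n : nat) (e : rel 'I_n) (a b : R) :
  forall i j, 0 <= transmx (adjmx R e) a b i j.
Proof.
have dg : forall s i j, 0 <= degpow (adjmx R e) s i j.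
  by move=> s i j; rewrite /degpow mxE mulrn_wge0 // mxE powR_ge0.
have adj0 : forall i j, 0 <= adjmx R e i j by move=> i j; rewrite /adjmx mxE ler0n.
rewrite /transmx.
apply: mx_ge0_mul => //; apply: mx_ge0_mul => //.
Qed.

Lemma main_gen (R : realType) (n : nat) (P : 'M[R]_n) (P0 : forall i j, 0 <= P i j)
  (x : 'cV[R]_n) (x_ge0 : forall v, 0 <= x v 0) (x_sum : \sum_v x v 0 = 1)
  (w : nat -> R) (w_ge0 : forall i, 0 <= w i)
  (lmax : R) (hlmax : max_singular_value P lmax)
  (L0 : nat) (lam : R) (hlam : 0 < lam < 1)
  (hdecay : forall i, (L0 <= i)%N -> w i * lmax ^+ i <= lam ^+ i)
  (delta : R) (hdelta : 0 < delta < 1) (L : nat) (L0L : (L0 <= L)%N)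
  (hLpow : lam ^+ L <= (1 - lam) * delta / 19) :
  norm2 (ppr_tail w P x L) <= delta / 19 /\
  (forall pihat : 'I_n -> R,
     (forall v, 18 / 19 * delta < ppr_trunc w P x L v ->
        `|ppr_trunc w P x L v - pihat v| <= ppr_trunc w P x L v / 20) ->
     forall v, delta <= ppr w P x v ->
        `|ppr w P x v - pihat v| <= ppr w P x v / 10).
Proof.
have /andP[lam0 lam1] := hlam; have /andP[d0 d1] := hdelta.
have Pi0 : forall i v j, 0 <= (P ^+ i *m x) v j.
  elim=> [|i IH] v j; first by rewrite expr0 mul1mx (ord1 j) x_ge0.
  by rewrite exprS -mulmxA; apply: mx_ge0_mul.
have term0 : forall v i, 0 <= term w P x v i.
  by move=> v i; rewrite /term mulr_ge0.
have lmax0 : 0 <= lmax by case: hlmax.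
have nx : nrm (fun v => x v 0) <= 1.
  have hx1 : forall v, x v 0 <= 1.
    move=> v; rewrite -x_sum (bigD1 v) //= lerDl.
    by apply: sumr_ge0 => i _.
  have : sqn (fun v => x v 0) <= 1.
    rewrite /sqn -x_sum; apply: ler_sum => v _.
    by have := hx1 v; have := x_ge0 v; nra.
  by move=> h; rewrite /nrm -sqrtr1 ler_sqrt.
have termb : forall i, (L0 <= i)%N -> nrm (fun v => term w P x v i) <= lam ^+ i.
  move=> i hi; rewrite /term nrm_scale ger0_norm //.
  apply: le_trans (hdecay _ hi); rewrite ler_wpM2l //.
  apply: le_trans (Ppow_bound hlmax x i) _.
  by rewrite -[X in _ <= X]mulr1 ler_wpM2l // exprn_ge0.
pose y := (1 - lam) * delta / 19.
pose B := lam * delta / 19.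
have B0 : 0 <= B by rewrite /B !mulr_ge0 // ?ltW // invr_ge0.
pose S := fun N v => \sum_(L.+1 <= i < N) term w P x v i.
have SB : forall N, nrm (S N) <= B.
  move=> N; apply: le_trans (nrm_sum (index_iota L.+1 N) (fun i v => term w P x v i)) _.
  apply: le_trans (_ : \sum_(L.+1 <= i < N) lam ^+ i <= _).
    rewrite big_seq_cond [X in _ <= X]big_seq_cond; apply: ler_sum => i.
    rewrite andbT mem_index_iota => /andP[hi _]; apply: termb.
    exact: leq_trans L0L (ltnW hi).
  have [hN|hN] := leqP L.+1 N; last by rewrite big_geq // ltnW.
  have E := geom_sum lam hN.
  have lN : 0 <= lam ^+ N by rewrite exprn_ge0 // ltW.
  have lL : 0 <= lam ^+ L by rewrite exprn_ge0 // ltW.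
  move: E; rewrite exprS; set s := \sum_(_ <= _ < _) _ => E.
  rewrite /B; move: hLpow; rewrite /y => hL.
  nra.
have Sbv : forall N v, S N v <= B.
  move=> N v; apply: le_trans (ler_norm _) _; apply: le_trans (coord_le_nrm _ v) _.
  exact: SB.
have Smono : forall v, {homo (fun N => S N v) : N N' / (N <= N')%N >-> N <= N'}.
  by move=> v; apply: psum_mono.
have Scvg : forall v, cvgn (fun N => S N v).
  move=> v; apply: nondecreasing_is_cvgn; first exact: Smono.
  by exists B => _ [N _ <-]; exact: Sbv.
pose l := fun v => lim ((fun N => S N v) @ \oo).
have lB : forall v, l v <= B.
  move=> v; apply: limr_le; first exact: Scvg.
  by near=> N; exact: Sbv.
have l0 : forall v, 0 <= l v.
  move=> v; apply: limr_ge; first exact: Scvg.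
  by near=> N; apply: sumr_ge0.
have nl : nrm l <= B.
  have cv : sqn (S N) @[N --> \oo] --> sqn l.
    apply: cvg_sumseq => v; rewrite expr2.
    under eq_fun do rewrite expr2.
    exact: (cvgM (Scvg v) (Scvg v)).
  have : sqn l <= B ^+ 2.
    rewrite -(cvg_lim (@Rhausdorff R) cv); apply: limr_le; first exact: cvgP cv.
    near=> N; rewrite sqn_nrm; have := SB N; have := nrm_ge0 (S N); nra.
  by move=> h; rewrite /nrm -(ger0_norm B0) -sqrtr_sqr ler_sqrt // sqr_ge0.
split.
  change (nrm l <= delta / 19); apply: le_trans nl _.
  rewrite /B ler_pM2r ?invr_gt0 //; nra.
move=> pihat hyp v hv.
have pe : ppr w P x v = ppr_trunc w P x L v + l v.
  rewrite /ppr /series_from; apply: cvg_lim; first exact: Rhausdorff.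
  have cv : (fun N => ppr_trunc w P x L v + S N v) @ \oo --> ppr_trunc w P x L v + l v.
    exact: (cvgD (cvg_cst _) (Scvg v)).
  apply: cvg_trans cv; apply: near_eq_cvg; near=> N.
  rewrite /ppr_trunc /S -big_cat_nat //.
  by near: N; exact: nbhs_infty_ge.
have tB : l v <= B by apply: lB.
have t0 := l0 v.
have hB : B < delta / 19 by rewrite /B ltr_pM2r ?invr_gt0 // gtr_pMl.
have h1 : 18 / 19 * delta < ppr_trunc w P x L v by rewrite pe in hv; lra.
have := hyp v h1; rewrite !ler_norml pe => /andP[u1 u2].
apply/andP; split; lra.
Unshelve. all: by end_near.
Qed.

Theorem theoremC2 (R : realType) (n : nat) (e : rel 'I_n)
  (e_sym : symmetric e) (e_irr : irreflexive e)
  (a b : R) (ha : 0 <= a <= 1) (hb : 0 <= b <= 1)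
  (x : 'cV[R]_n) (x_ge0 : forall v, 0 <= x v 0) (x_sum : \sum_v x v 0 = 1)
  (w : nat -> R) (w_ge0 : forall i, 0 <= w i)
  (w_sum : (fun N => \sum_(i < N) w i) @ \oo --> (1 : R))
  (lmax : R) (hlmax : max_singular_value (transmx (adjmx R e) a b) lmax)
  (L0 : nat) (hL0 : (1 <= L0)%N) (lam : R) (hlam : 0 < lam < 1)
  (hdecay : forall i, (L0 <= i)%N -> w i * lmax ^+ i <= lam ^+ i)
  (delta : R) (hdelta : 0 < delta < 1) :
  let P := transmx (adjmx R e) a b in
  let L := choose_L L0 lam delta in
  norm2 (ppr_tail w P x L) <= delta / 19 /\
  (forall pihat : 'I_n -> R,
     (forall v, 18 / 19 * delta < ppr_trunc w P x L v ->
        `|ppr_trunc w P x L v - pihat v| <= ppr_trunc w P x L v / 20) ->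
     forall v, delta <= ppr w P x v ->
        `|ppr w P x v - pihat v| <= ppr w P x v / 10).
Proof.
move=> P L.
exact: (@main_gen R n P (P_ge0 R n e a b) x x_ge0 x_sum w w_ge0 lmax hlmax L0 lam hlam hdecay delta hdelta L (leq_maxl _ _) (Lpow_bound R L0 lam delta hlam hdelta)).
Qed.
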